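(* Let $k$ be a field. Every finitely presented right $\mathrm{RCFM}(k)$-module has projective dimension at most $1$.
   Context: $\mathrm{RCFM}(k)$ is the $k$-algebra of $\mathbb{N}_0\times\mathbb{N}_0$ matrices over $k$ with finitely many nonzero entries in each row and each column. *)

(* Defs.v *)
From HB Require Import structures.
From mathcomp Require Import all_boot all_order all_algebra.
From mathcomp Require Import boolp.
From Stdlib Require Import ClassicalEpsilon.
Set Implicit Arguments. Unset Strict Implicit. Unset Printing Implicit Defensive.
Import Order.TTheory GRing.Theory.
Local Open Scope ring_scope.

Section FSum.
Variable R : nzRingType.

Definition fsupp (f : nat -> R) (N : nat) : Prop := forall j, (N <= j)%N -> f j = 0.

Definition fsum (f : nat -> R) : R :=
  \sum_(j < epsilon (inhabits 0%N) (fsupp f)) f j.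

Lemma fsupp_le f N M : (N <= M)%N -> fsupp f N -> fsupp f M.
Proof. by move=> NM h j Mj; apply: h; apply: leq_trans Mj. Qed.

Lemma sum_ext_zero (f : nat -> R) N M : (N <= M)%N -> fsupp f N ->
  \sum_(j < M) f j = \sum_(j < N) f j.
Proof.
move=> NM h; rewrite -(subnKC NM) big_split_ord /= [X in _ + X]big1 ?addr0 // => i _.
by apply: h; rewrite leq_addr.
Qed.

Lemma fsumE f N : fsupp f N -> fsum f = \sum_(j < N) f j.
Proof.
move=> h; rewrite /fsum; set N' := epsilon _ _.
have h' : fsupp f N' by apply: epsilon_spec; exists N.
rewrite -(@sum_ext_zero f N' (maxn N N')) ?leq_maxr //.
by rewrite (@sum_ext_zero f N (maxn N N')) ?leq_maxl.
Qed.

Lemma common_bound (P : nat -> nat -> Prop) :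
  (forall l N M, (N <= M)%N -> P l N -> P l M) ->
  (forall l, exists N, P l N) -> forall n, exists N, forall l, (l < n)%N -> P l N.
Proof.
move=> mono h; elim=> [|n [N HN]]; first by exists 0%N.
have [M HM] := h n; exists (maxn N M) => l; rewrite ltnS leq_eqVlt.
case/orP=> [/eqP->|ln]; first by apply: mono HM; rewrite leq_maxr.
by apply: mono (HN l ln); rewrite leq_maxl.
Qed.

End FSum.

Section RCFM.
Variable k : fieldType.

Definition row_col_finite (A : nat -> nat -> k) : Prop :=
  (forall i, exists N, forall j, (N <= j)%N -> A i j = 0) /\
  (forall j, exists N, forall i, (N <= i)%N -> A i j = 0).

Record rcfm_type := RCFMat { rcfm_mx :> nat -> nat -> k; rcfm_ok : row_col_finite rcfm_mx }.

HB.instance Definition _ := gen_eqMixin rcfm_type.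
HB.instance Definition _ := gen_choiceMixin rcfm_type.

Lemma rcfm_inj (A B : rcfm_type) : rcfm_mx A = rcfm_mx B -> A = B.
Proof.
case: A B => [A hA] [B hB] /= eAB; subst B.
by rewrite (Prop_irrelevance hA hB).
Qed.

Lemma rcfm_ext (A B : rcfm_type) : (forall i j, A i j = B i j) -> A = B.
Proof. by move=> h; apply: rcfm_inj; apply: funext => i; apply: funext => j. Qed.

Lemma rowf (A : rcfm_type) i : exists N, fsupp (A i) N.
Proof. by case: A => A [h1 h2]; exact: h1. Qed.
Lemma colf (A : rcfm_type) j : exists N, fsupp (fun i => A i j) N.
Proof. by case: A => A [h1 h2]; exact: h2. Qed.

Lemma rcf0 : row_col_finite (fun _ _ => 0).
Proof. by split=> ?; exists 0%N. Qed.

Lemma rcfD (A B : rcfm_type) : row_col_finite (fun i j => A i j + B i j).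
Proof.
split=> x.
  have [N hN] := rowf A x; have [M hM] := rowf B x; exists (maxn N M) => j.
  by rewrite geq_max => /andP[/hN-> /hM->]; rewrite addr0.
have [N hN] := colf A x; have [M hM] := colf B x; exists (maxn N M) => j.
by rewrite geq_max => /andP[/hN-> /hM->]; rewrite addr0.
Qed.

Lemma rcfN (A : rcfm_type) : row_col_finite (fun i j => - A i j).
Proof.
split=> x.
  by have [N hN] := rowf A x; exists N => j /hN->; rewrite oppr0.
by have [N hN] := colf A x; exists N => j /hN->; rewrite oppr0.
Qed.

Definition rcfm_zero := RCFMat rcf0.
Definition rcfm_add A B := RCFMat (rcfD A B).
Definition rcfm_opp A := RCFMat (rcfN A).

Lemma rcfm_addA : associative rcfm_add.
Proof. by move=> A B C; apply: rcfm_ext => i j /=; rewrite addrA. Qed.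
Lemma rcfm_addC : commutative rcfm_add.
Proof. by move=> A B; apply: rcfm_ext => i j /=; rewrite addrC. Qed.
Lemma rcfm_add0 : left_id rcfm_zero rcfm_add.
Proof. by move=> A; apply: rcfm_ext => i j /=; rewrite add0r. Qed.
Lemma rcfm_addN : left_inverse rcfm_zero rcfm_opp rcfm_add.
Proof. by move=> A; apply: rcfm_ext => i j /=; rewrite addNr. Qed.

HB.instance Definition _ :=
  GRing.isZmodule.Build rcfm_type rcfm_addA rcfm_addC rcfm_add0 rcfm_addN.

Definition mulf (A B : rcfm_type) i j := fsum (fun l => A i l * B l j).

Lemma mulfE (A B : rcfm_type) i j N : fsupp (A i) N ->
  mulf A B i j = \sum_(l < N) A i l * B l j.
Proof. by move=> h; apply: fsumE => l /h->; rewrite mul0r. Qed.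

Lemma mulfE' (A B : rcfm_type) i j N : fsupp (fun l => B l j) N ->
  mulf A B i j = \sum_(l < N) A i l * B l j.
Proof. by move=> h; apply: fsumE => l /h->; rewrite mulr0. Qed.

Lemma rcfM (A B : rcfm_type) : row_col_finite (mulf A B).
Proof.
split=> x.
  have [N hN] := rowf A x.
  have [M hM] := @common_bound (fun l M => fsupp (B l) M)
     (fun l N M NM h => fsupp_le NM h) (rowf B) N.
  exists M => j Mj; rewrite (mulfE _ _ hN) big1 // => l _.
  by rewrite (hM l (ltn_ord l) j Mj) mulr0.
have [N hN] := colf B x.
have [M hM] := @common_bound (fun l M => fsupp (fun i => A i l) M)
   (fun l N M NM h => fsupp_le NM h) (colf A) N.
exists M => i Mi; rewrite (mulfE' _ _ hN) big1 // => l _.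
by rewrite (hM l (ltn_ord l) i Mi) mul0r.
Qed.

Definition rcfm_mul A B := RCFMat (rcfM A B).

Lemma rcf1 : row_col_finite (fun i j => (i == j)%:R : k).
Proof.
split=> x; exists x.+1 => y xy; case: eqP => // e; subst;
  by rewrite ltnn in xy.
Qed.
Definition rcfm_one := RCFMat rcf1.

Lemma rcfm_mulA : associative rcfm_mul.
Proof.
move=> A B C; apply: rcfm_ext => i j /=.
have [N hN] := rowf A i.
have [L hL] := @common_bound (fun l M => fsupp (B l) M)
   (fun l N M NM h => fsupp_le NM h) (rowf B) N.
rewrite (mulfE _ _ hN).
have hAB : fsupp (mulf A B i) L.
  move=> l Ll; rewrite (mulfE _ _ hN) big1 // => m _.
  by rewrite (hL m (ltn_ord m) l Ll) mulr0.
rewrite (@mulfE (rcfm_mul A B) C i j L hAB) /=.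
rewrite /rcfm_mul /=; symmetry.
under eq_bigr => l _ do rewrite (mulfE _ _ hN) mulr_suml.
rewrite exchange_big /=; apply: eq_bigr => m _.
rewrite (mulfE _ _ (hL m (ltn_ord m))) mulr_sumr; apply: eq_bigr => l _.
by rewrite mulrA.
Qed.

Lemma rcfm_mul1 : left_id rcfm_one rcfm_mul.
Proof.
move=> A; apply: rcfm_ext => i j /=.
rewrite (@mulfE rcfm_one A i j i.+1); last first.
  by move=> l il /=; case: eqP => // e; subst; rewrite ltnn in il.
rewrite big_ord_recr /= eqxx mul1r big1 ?add0r // => l _.
by rewrite /= eq_sym (ltn_eqF (ltn_ord l)) mul0r.
Qed.

Lemma rcfm_mulr1 : right_id rcfm_one rcfm_mul.
Proof.
move=> A; apply: rcfm_ext => i j /=.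
rewrite (@mulfE' A rcfm_one i j j.+1); last first.
  by move=> l il /=; case: eqP => // e; subst; rewrite ltnn in il.
rewrite big_ord_recr /= eqxx mulr1 big1 ?add0r // => l _.
by rewrite /= (ltn_eqF (ltn_ord l)) mulr0.
Qed.

Lemma rcfm_mulDl : left_distributive rcfm_mul rcfm_add.
Proof.
move=> A B C; apply: rcfm_ext => i j /=.
have [N hN] := colf C j.
rewrite (mulfE' _ _ hN) (mulfE' _ _ hN) (@mulfE' B C i j N hN).
by rewrite -big_split /=; apply: eq_bigr => l _; rewrite mulrDl.
Qed.

Lemma rcfm_mulDr : right_distributive rcfm_mul rcfm_add.
Proof.
move=> A B C; apply: rcfm_ext => i j /=.
have [N hN] := rowf A i.
rewrite (mulfE _ _ hN) (mulfE _ _ hN) (@mulfE A C i j N hN).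
by rewrite -big_split /=; apply: eq_bigr => l _; rewrite mulrDr.
Qed.

Lemma rcfm_one_neq0 : rcfm_one != 0.
Proof.
apply/eqP => e; have := congr1 (fun A : rcfm_type => A 0%N 0%N) e.
by rewrite /rcfm_one /= => /eqP; rewrite oner_eq0.
Qed.

HB.instance Definition _ := GRing.Zmodule_isNzRing.Build rcfm_type
  rcfm_mulA rcfm_mul1 rcfm_mulr1 rcfm_mulDl rcfm_mulDr rcfm_one_neq0.

End RCFM.

Definition RCFM (k : fieldType) : nzRingType := rcfm_type k.

(* Right modules over a ring R are left modules over the converse ring *)
(* R^c (scalar action a *: m stands for m . a).                        *)
Notation rmodType R := (lmodType (GRing.converse R)).

Section RightModules.
Variable R : nzRingType.

Definition rhom (U V : rmodType R) (f : U -> V) : Prop :=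
  (forall x y, f (x + y) = f x + f y) /\ (forall a x, f (a *: x) = a *: f x).

Definition onto (U V : Type) (f : U -> V) : Prop := forall y, exists x, f x = y.

Definition rprojective (P : rmodType R) : Prop :=
  forall (N Q : rmodType R) (g : N -> Q) (f : P -> Q),
    rhom g -> onto g -> rhom f ->
    exists h : P -> N, rhom h /\ forall x, g (h x) = f x.

Definition rfinitely_presented (M : rmodType R) : Prop :=
  exists (n : nat) (p : 'rV[GRing.converse R]_n -> M),
    rhom p /\ onto p /\
    exists (m : nat) (v : 'I_m -> 'rV[GRing.converse R]_n),
      (forall i, p (v i) = 0) /\
      (forall x, p x = 0 ->
         exists c : 'I_m -> GRing.converse R, x = \sum_(i < m) c i *: v i).

Definition rpd_le1 (M : rmodType R) : Prop :=
  exists (P0 P1 : rmodType R) (d : P1 -> P0) (e : P0 -> M),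
    rprojective P0 /\ rprojective P1 /\ rhom d /\ rhom e /\
    injective d /\ onto e /\
    (forall x, e x = 0 <-> exists y, x = d y).

End RightModules.

(* Main.v *)
Require Import Defs.
From mathcomp Require Import all_boot all_algebra.
From HB Require Import structures.
From mathcomp Require Import all_order.
From mathcomp Require Import boolp.
From Stdlib Require Import ClassicalEpsilon.
Import Defs.
Set Implicit Arguments. Unset Strict Implicit. Unset Printing Implicit Defensive.
Import GRing.Theory.
Local Open Scope ring_scope.

Section ModGen.
Variable R : nzRingType.
Notation Rc := (GRing.converse R).

Lemma rhom0 (U V : rmodType R) (f : U -> V) : rhom f -> f 0 = 0.
Proof. by case=> _ hZ; rewrite -(scale0r (0 : U)) hZ scale0r. Qed.
Lemma rhomN (U V : rmodType R) (f : U -> V) x : rhom f -> f (- x) = - f x.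
Proof. by case=> _ hZ; rewrite -scaleN1r hZ scaleN1r. Qed.
Lemma rhomB (U V : rmodType R) (f : U -> V) x y : rhom f -> f (x - y) = f x - f y.
Proof. by move=> h; rewrite h.1 rhomN. Qed.
Lemma rhom_sum (U V : rmodType R) (f : U -> V) m (F : 'I_m -> U) : rhom f ->
  f (\sum_(i < m) F i) = \sum_(i < m) f (F i).
Proof.
move=> h; elim: m F => [|m IH] F; first by rewrite !big_ord0 rhom0.
by rewrite !big_ord_recr h.1 IH.
Qed.

Lemma free_proj n : rprojective ('rV[Rc]_n : rmodType R).
Proof.
move=> N Q g f hg og hf.
have [ns hns] := boolp.choice (fun i : 'I_n => og (f (delta_mx 0 i))).
exists (fun x : 'rV[Rc]_n => \sum_(i < n) x 0 i *: ns i); split; first split.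
- by move=> x y; rewrite -big_split /=; apply: eq_bigr => i _; rewrite mxE scalerDl.
- move=> c x; rewrite scaler_sumr; apply: eq_bigr => i _; rewrite mxE scalerA //.
- move=> x; rewrite rhom_sum //; rewrite {2}(row_sum_delta x) rhom_sum //.
  by apply: eq_bigr => i _; rewrite hg.2 hns hf.2.
Qed.

Lemma retract_proj (F P : rmodType R) (phi : F -> P) (s : P -> F) :
  rprojective F -> rhom phi -> rhom s -> (forall y, phi (s y) = y) -> rprojective P.
Proof.
move=> pF hphi hs hK N Q g f hg og hf.
have hfphi : rhom (fun x => f (phi x)).
  by split=> [x y|c x]; rewrite ?hphi.1 ?hf.1 // hphi.2 hf.2.
have [h [hh hgh]] := pF N Q g _ hg og hfphi.
exists (fun y => h (s y)); split.
  by split=> [x y|c x]; rewrite ?hs.1 ?hh.1 // hs.2 hh.2.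
by move=> y; rewrite hgh hK.
Qed.

Section Kernel.
Variables (n : nat) (M : rmodType R) (p : 'rV[Rc]_n -> M).
Hypothesis hp : rhom p.

Record Kt (h : rhom p) := MkK { kv : 'rV[Rc]_n; kp : p kv = 0 }.
Notation K := (Kt hp).
HB.instance Definition _ := gen_eqMixin K.
HB.instance Definition _ := gen_choiceMixin K.

Lemma kv_inj : injective (@kv hp).
Proof.
case=> [x hx] [y hy] /= e; subst y; by rewrite (Prop_irrelevance hx hy).
Qed.

Lemma kp0 : p 0 = 0. Proof. exact: rhom0. Qed.
Lemma kpD x y : p x = 0 -> p y = 0 -> p (x + y) = 0.
Proof. by move=> hx hy; rewrite hp.1 hx hy addr0. Qed.
Lemma kpN x : p x = 0 -> p (- x) = 0.
Proof. by move=> hx; rewrite rhomN // hx oppr0. Qed.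
Lemma kpZ c x : p x = 0 -> p (c *: x) = 0.
Proof. by move=> hx; rewrite hp.2 hx scaler0. Qed.

Definition k0 : K := MkK hp kp0.
Definition kadd (x y : K) : K := MkK hp (kpD (kp x) (kp y)).
Definition kopp (x : K) : K := MkK hp (kpN (kp x)).
Definition kscale (c : Rc) (x : K) : K := MkK hp (kpZ c (kp x)).

Lemma kaddA : associative kadd.
Proof. by move=> x y z; apply: kv_inj; rewrite /= addrA. Qed.
Lemma kaddC : commutative kadd.
Proof. by move=> x y; apply: kv_inj; rewrite /= addrC. Qed.
Lemma kadd0 : left_id k0 kadd.
Proof. by move=> x; apply: kv_inj; rewrite /= add0r. Qed.
Lemma kaddN : left_inverse k0 kopp kadd.
Proof. by move=> x; apply: kv_inj; rewrite /= addNr. Qed.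
HB.instance Definition _ := GRing.isZmodule.Build K kaddA kaddC kadd0 kaddN.

Lemma kscaleA a b (x : K) : kscale a (kscale b x) = kscale (a * b) x.
Proof. by apply: kv_inj; rewrite /= scalerA. Qed.
Lemma kscale1 : left_id 1 kscale.
Proof. by move=> x; apply: kv_inj; rewrite /= scale1r. Qed.
Lemma kscaleDr : right_distributive kscale +%R.
Proof. by move=> a x y; apply: kv_inj; rewrite /= scalerDr. Qed.
Lemma kscaleDl (x : K) : {morph kscale^~ x : a b / a + b}.
Proof. by move=> a b; apply: kv_inj; rewrite /= scalerDl. Qed.
HB.instance Definition _ := GRing.Zmodule_isLmodule.Build Rc K
  kscaleA kscale1 kscaleDr kscaleDl.

Lemma kv_hom : rhom (@kv hp : K -> 'rV[Rc]_n).
Proof. by split. Qed.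

End Kernel.
End ModGen.


Section Res.
Variable R : nzRingType.
Notation Rc := (GRing.converse R).
Variables (M : rmodType R) (n : nat) (p : 'rV[Rc]_n -> M) (hp : rhom p).
Variables (m : nat) (v : 'I_m -> 'rV[Rc]_n).
Hypotheses (hv : forall i, p (v i) = 0)
  (hker : forall x, p x = 0 -> exists c : 'I_m -> Rc, x = \sum_(i < m) c i *: v i).
Variables (Xm Ym Xn Yn : nat -> R).
Hypotheses (hm : forall i j, (i < m)%N -> (j < m)%N -> Ym i * Xm j = (i == j)%:R)
  (hn : forall i j, (i < n)%N -> (j < n)%N -> Yn i * Xn j = (i == j)%:R).
Variable E : R.
Let vh : R := \sum_(l < n) \sum_(i < m) Xn l * (v i 0 l : R) * Ym i.
Hypotheses (hE1 : vh * E = 0) (hE2 : forall X, vh * X = 0 -> E * X = X).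

Lemma convE (x y : Rc) : x * y = (y : R) * (x : R). Proof. by []. Qed.
Lemma scE r (c : Rc) (z : 'rV[Rc]_r) l : (c *: z) 0 l = (z 0 l : R) * (c : R).
Proof. by rewrite mxE convE. Qed.

Definition flat (c : 'rV[Rc]_m) : R := \sum_(i < m) Xm i * (c 0 i : R).
Definition flatn (z : 'rV[Rc]_n) : R := \sum_(l < n) Xn l * (z 0 l : R).

Lemma sum_deltaR r (F : 'I_r -> R) (i : 'I_r) : \sum_(j < r) (i == j :> nat)%:R * F j = F i.
Proof.
rewrite (bigD1 i) //= eqxx mul1r big1 ?addr0 // => j ne.
suff -> : (i == j :> nat) = false by rewrite mul0r.
by apply/negbTE; rewrite eq_sym; exact: ne.
Qed.

Lemma flat_inv (c : 'rV[Rc]_m) (i : 'I_m) : (c 0 i : R) = Ym i * flat c.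
Proof.
rewrite /flat mulr_sumr -[LHS](sum_deltaR (fun j => (c 0 j : R)) i).
by apply: eq_bigr => j _; rewrite mulrA hm.
Qed.
Lemma flatn_inv (z : 'rV[Rc]_n) (l : 'I_n) : (z 0 l : R) = Yn l * flatn z.
Proof.
rewrite /flatn mulr_sumr -[LHS](sum_deltaR (fun j => (z 0 j : R)) l).
by apply: eq_bigr => j _; rewrite mulrA hn.
Qed.
Lemma flatn_inj (z : 'rV[Rc]_n) : flatn z = 0 -> z = 0.
Proof. by move=> h; apply/rowP => l; rewrite flatn_inv h mulr0 mxE. Qed.
Lemma flatnD (z1 z2 : 'rV[Rc]_n) : flatn (z1 + z2) = flatn z1 + flatn z2.
Proof. by rewrite /flatn -big_split; apply: eq_bigr => l _; rewrite mxE mulrDr. Qed.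
Lemma flatnN (z : 'rV[Rc]_n) : flatn (- z) = - flatn z.
Proof. by rewrite /flatn -sumrN; apply: eq_bigr => l _; rewrite mxE mulrN. Qed.
Lemma flatD (c1 c2 : 'rV[Rc]_m) : flat (c1 + c2) = flat c1 + flat c2.
Proof. by rewrite /flat -big_split; apply: eq_bigr => l _; rewrite mxE mulrDr. Qed.
Lemma flatZ (a : Rc) (c : 'rV[Rc]_m) : flat (a *: c) = flat c * (a : R).
Proof. by rewrite /flat mulr_suml; apply: eq_bigr => l _; rewrite scE mulrA. Qed.

Definition psi (c : 'rV[Rc]_m) : 'rV[Rc]_n := \sum_(i < m) c 0 i *: v i.

Lemma psi_hom : rhom psi.
Proof.
split=> [x y|a x]; rewrite /psi.
  by rewrite -big_split /=; apply: eq_bigr => i _; rewrite mxE scalerDl.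
by rewrite scaler_sumr; apply: eq_bigr => i _; rewrite mxE scalerA.
Qed.

Lemma key (c : 'rV[Rc]_m) : flatn (psi c) = vh * flat c.
Proof.
rewrite /flatn /vh mulr_suml; apply: eq_bigr => l _.
rewrite /psi summxE mulr_sumr mulr_suml; apply: eq_bigr => i _.
by rewrite scE -!mulrA -flat_inv.
Qed.

Lemma vh_proj : vh * \sum_(j < m) Xm j * Ym j = vh.
Proof.
rewrite mulr_sumr.
have h : forall j : 'I_m, vh * Xm j = \sum_(l < n) Xn l * (v j 0 l : R).
  move=> j; rewrite /vh mulr_suml; apply: eq_bigr => l _.
  rewrite mulr_suml -[RHS](sum_deltaR (fun i => Xn l * (v i 0 l : R)) j).
  apply: eq_bigr => i _; rewrite -mulrA hm // eq_sym.
  case: (_ == _); by rewrite ?mulr1 ?mulr0 ?mul1r ?mul0r.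
rewrite (eq_bigr (fun j : 'I_m => \sum_(l < n) Xn l * (v j 0 l : R) * Ym j)); last first.
  by move=> j _; rewrite mulrA h mulr_suml.
by rewrite /vh exchange_big.
Qed.

Definition q (c : 'rV[Rc]_m) : 'rV[Rc]_m := \row_i ((Ym i * ((1 - E) * flat c)) : Rc).

Lemma q_hom : rhom q.
Proof.
split=> [x y|a x]; apply/rowP => i; rewrite !mxE.
  by rewrite flatD mulrDr mulrDr.
by rewrite flatZ convE !mulrA.
Qed.

Lemma flat_q (c : 'rV[Rc]_m) : flat (q c) = (\sum_(j < m) Xm j * Ym j) * ((1 - E) * flat c).
Proof. by rewrite /flat mulr_suml; apply: eq_bigr => j _; rewrite mxE mulrA. Qed.

Lemma psi_q (c : 'rV[Rc]_m) : psi (q c) = psi c.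
Proof.
apply/eqP; rewrite -subr_eq0; apply/eqP; apply: flatn_inj.
rewrite flatnD flatnN !key flat_q mulrA vh_proj mulrA mulrBr mulr1 hE1 subr0.
by rewrite subrr.
Qed.

Lemma q_ker (c : 'rV[Rc]_m) : psi c = 0 -> q c = 0.
Proof.
move=> h; have h1 : vh * flat c = 0 by rewrite -key h /flatn big1 // => l _; rewrite mxE mulr0.
apply/rowP => i; rewrite !mxE mulrBl mul1r hE2 // subrr; exact: (mulr0 (Ym i)).
Qed.

Lemma p_psi (c : 'rV[Rc]_m) : p (psi c) = 0.
Proof.
rewrite /psi rhom_sum // big1 // => i _; by rewrite hp.2 hv scaler0.
Qed.

Definition phi (c : 'rV[Rc]_m) : Kt hp := MkK hp (p_psi c).

Lemma phi_hom : rhom phi.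
Proof.
by split=> [x y|a x]; apply: kv_inj => /=; rewrite ?psi_hom.1 ?psi_hom.2.
Qed.

Definition cf := projT1 (boolp.choice (fun y : Kt hp => hker (kp y))).
Definition crow (y : Kt hp) : 'rV[Rc]_m := \row_i cf y i.
Lemma psi_crow y : psi (crow y) = kv y.
Proof.
rewrite (projT2 (boolp.choice (fun y : Kt hp => hker (kp y))) y) /psi.
by apply: eq_bigr => i _; rewrite mxE.
Qed.

Definition sec (y : Kt hp) := q (crow y).

Lemma sec_hom : rhom sec.
Proof.
have [qA qZ] := q_hom; have [pA pZ] := psi_hom.
have qB : forall a b, q (a - b) = q a - q b by move=> a b; apply: rhomB; exact: q_hom.
have pB : forall a b, psi (a - b) = psi a - psi b by move=> a b; apply: rhomB; exact: psi_hom.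
split=> [x y|a x]; rewrite /sec.
  have h : q (crow (x + y) - crow x - crow y) = 0.
    apply: q_ker; rewrite !pB !psi_crow /=.
    by rewrite (addrC (kv x)) addrK subrr.
  move/eqP: h; rewrite !qB subr_eq0 subr_eq => /eqP ->.
  by rewrite addrC.
have h : q (crow (a *: x) - a *: crow x) = 0.
  by apply: q_ker; rewrite pB pZ !psi_crow /= subrr.
by move/eqP: h; rewrite qB subr_eq0 qZ => /eqP.
Qed.

Lemma phi_sec y : phi (sec y) = y.
Proof. by apply: kv_inj; rewrite /= /sec psi_q psi_crow. Qed.

Lemma Kt_proj : rprojective (Kt hp).
Proof.
apply: (retract_proj _ phi_hom sec_hom phi_sec); exact: free_proj.
Qed.

End Res.


Theorem main_abs (R : nzRingType)
  (rick : forall a : R, exists E : R, a * E = 0 /\ forall X : R, a * X = 0 -> E * X = X)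
  (iso : forall m : nat, exists Xs Ys : nat -> R, forall i j, (i < m)%N -> (j < m)%N ->
     Ys i * Xs j = (i == j)%:R)
  (M : rmodType R) : rfinitely_presented M -> rpd_le1 M.
Proof.
move=> [n [p [hp [op [m [v [hv hker]]]]]]].
have [Xm [Ym hm]] := iso m; have [Xn [Yn hn]] := iso n.
have [E [hE1 hE2]] := rick (\sum_(l < n) \sum_(i < m) Xn l * (v i 0 l : R) * Ym i).
exists ('rV[GRing.converse R]_n : rmodType R), (Kt hp), (@kv _ _ _ _ hp), p.
split; first exact: free_proj.
split; first exact: (Kt_proj hv hker hm hn hE1 hE2).
split; first exact: kv_hom.
split; first exact: hp.
split; first exact: kv_inj.
split; first exact: op.
move=> x; split => [h|[y ->]]; [by exists (MkK hp h) | exact: kp].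
Qed.


Section Iso.
Variables (k : fieldType) (S : nat) (i : nat).
Hypothesis S0 : (0 < S)%N.

Definition xm (a b : nat) : k := (a == (b * S + i)%N)%:R.
Definition ym (a b : nat) : k := (b == (a * S + i)%N)%:R.

Lemma le_mulS b : (b <= b * S + i)%N.
Proof. by rewrite (leq_trans (leq_pmulr b S0)) // leq_addr. Qed.

Lemma xm_rc : row_col_finite xm.
Proof.
split=> x.
  exists x.+1 => b xb; rewrite /xm; case: eqP => // e.
  by move: (le_mulS b); rewrite -e => h; have := leq_trans xb h; rewrite ltnn.
exists (x * S + i).+1 => a xa; rewrite /xm; case: eqP => // e; by rewrite e ltnn in xa.
Qed.
Lemma ym_rc : row_col_finite ym.
Proof.
split=> x.
  exists (x * S + i).+1 => a xa; rewrite /ym; case: eqP => // e; by rewrite e ltnn in xa.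
exists x.+1 => b xb; rewrite /ym; case: eqP => // e.
by move: (le_mulS b); rewrite -e => h; have := leq_trans xb h; rewrite ltnn.
Qed.
Definition Xr : RCFM k := RCFMat xm_rc.
Definition Yr : RCFM k := RCFMat ym_rc.
End Iso.

Lemma eq_stride S a b i j : (i < S)%N -> (j < S)%N ->
  ((a * S + i == b * S + j) = (a == b) && (i == j))%N.
Proof.
move=> iS jS; apply/eqP/andP => [e|[/eqP-> /eqP->]] //.
have ij : i = j.
  by have := congr1 (modn^~ S) e; rewrite !modnMDl !modn_small.
subst j; split => //; move/addIn: e => /eqP; rewrite eqn_pmul2r //.
by apply: leq_ltn_trans iS.
Qed.

Lemma natR_entry (k : fieldType) (t : bool) a b : ((t%:R : RCFM k) a b) = if t then (a == b)%:R else 0.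
Proof. by case: t. Qed.

Lemma iso_rcfm (k : fieldType) (m : nat) : exists Xs Ys : nat -> RCFM k,
  forall i j, (i < m)%N -> (j < m)%N -> Ys i * Xs j = (i == j)%:R.
Proof.
have S0 : (0 < m.+1)%N by [].
exists (fun i => Xr k i S0), (fun i => Yr k i S0) => i j im jm.
apply: rcfm_ext => a b.
rewrite (_ : (Yr k i S0 * Xr k j S0 : RCFM k) a b = mulf (Yr k i S0) (Xr k j S0) a b) //.
rewrite (@mulfE _ (Yr k i S0) (Xr k j S0) a b (a * m.+1 + i)%N.+1); last first.
  by move=> l al; rewrite /= /ym; case: eqP => // e; rewrite e ltnn in al.
rewrite big_ord_recr /= big1 ?add0r; last first.
  by move=> l _; rewrite /ym (ltn_eqF (ltn_ord l)) mul0r.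
rewrite /ym /xm eqxx mul1r eq_stride ?(leq_trans im) ?(leq_trans jm) //.
by rewrite natR_entry andbC; case: ifP.
Qed.

From mathcomp Require Import functions.
Import Defs.
Local Open Scope ring_scope.

Lemma sum_delta (k : nzRingType) (F : nat -> k) r u : (u < r)%N ->
  \sum_(s < r) F s * (u == s)%:R = F u.
Proof.
move=> ur; rewrite (bigD1 (Ordinal ur)) //= eqxx mulr1 big1 ?addr0 // => i ne.
suff -> : (u == i) = false by rewrite mulr0.
by apply/negbTE; apply: contra ne => /eqP e; apply/eqP; apply: val_inj.
Qed.

Section Surj.
Variables (k : fieldType) (X : lmodType k) (S : X -> Prop) (f : nat -> X -> k).
Hypotheses (S0 : S 0) (SD : forall x y, S x -> S y -> S (x + y))
  (SZ : forall a x, S x -> S (a *: x)).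
Hypotheses (fD : forall s x y, f s (x + y) = f s x + f s y)
  (fZ : forall s a x, f s (a *: x) = a * f s x).

Lemma fN s x : f s (- x) = - f s x.
Proof. by rewrite -scaleN1r fZ mulN1r. Qed.
Lemma fB s x y : f s (x - y) = f s x - f s y.
Proof. by rewrite fD fN. Qed.
Lemma fsumX s r (c : nat -> X) : f s (\sum_(i < r) c i) = \sum_(i < r) f s (c i).
Proof.
elim: r => [|r IH]; first by rewrite !big_ord0 -(scale0r (0 : X)) fZ mul0r.
by rewrite !big_ord_recr fD IH.
Qed.
Lemma SN x : S x -> S (- x).
Proof. by move=> Sx; rewrite -scaleN1r; apply: SZ. Qed.
Lemma Ssum r (c : nat -> X) : (forall i, (i < r)%N -> S (c i)) -> S (\sum_(i < r) c i).
Proof.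
elim: r => [|r IH] h; first by rewrite big_ord0.
rewrite big_ord_recr; apply: SD; last exact: h.
by apply: IH => i ir; apply: h; apply: ltnW.
Qed.

Lemma surj r : (forall lam : nat -> k,
    (forall x, S x -> \sum_(s < r) lam s * f s x = 0) -> forall s, (s < r)%N -> lam s = 0) ->
  forall t : nat -> k, exists x, S x /\ forall s, (s < r)%N -> f s x = t s.
Proof.
elim: r => [_ t|r IH H]; first by exists 0; split=> // s.
have H' : forall lam : nat -> k,
    (forall x, S x -> \sum_(s < r) lam s * f s x = 0) -> forall s, (s < r)%N -> lam s = 0.
  move=> lam hl s sr.
  have h2 : forall x, S x -> \sum_(s < r.+1) (if (s < r)%N then lam s else 0) * f s x = 0.
    move=> x Sx; rewrite big_ord_recr /= ltnn mul0r addr0 -[RHS](hl x Sx).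
    by apply: eq_bigr => i _; rewrite ltn_ord.
  by have := H (fun u => if (u < r)%N then lam u else 0) h2 s (leqW sr); rewrite /= sr.
have IH' := IH H'.
have [z [Sz [z0 z1]]] : exists z, S z /\ (forall s, (s < r)%N -> f s z = 0) /\ f r z != 0.
  apply: contrapT => hne.
  have hz : forall z, S z -> (forall s, (s < r)%N -> f s z = 0) -> f r z = 0.
    move=> z Sz hs; case: (eqVneq (f r z) 0) => // nz; exfalso; apply: hne; by exists z.
  have [zs hzs] := boolp.choice (fun s => IH' (fun u => (u == s)%:R)).
  pose mu s := f r (zs s).
  have key : forall x, S x -> f r x = \sum_(s < r) f s x * mu s.
    move=> x Sx; pose y := x - \sum_(s < r) f s x *: zs s.
    have Sy : S y.
      apply: SD => //; apply: SN; apply: (@Ssum r (fun s => f s x *: zs s)) => i _; apply: SZ; exact: (hzs i).1.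
    have := hz y Sy.
    have hyp : forall u, (u < r)%N -> f u y = 0.
      move=> u ur; rewrite /y fB (fsumX u r (fun s => f s x *: zs s)).
      rewrite (eq_bigr (fun s : 'I_r => f s x * (u == s)%:R)); last first.
        by move=> s _; rewrite fZ (hzs s).2.
      by rewrite (sum_delta (fun s => f s x) ur) subrr.
    move/(_ hyp); rewrite /y fB (fsumX r r (fun s => f s x *: zs s)) => /eqP; rewrite subr_eq0 => /eqP ->.
    by apply: eq_bigr => s _; rewrite fZ mulrC.
  have h2 : forall x, S x -> \sum_(s < r.+1) (if (s < r)%N then - mu s else 1) * f s x = 0.
    move=> x Sx; rewrite big_ord_recr /= ltnn mul1r (key x Sx).
    rewrite (eq_bigr (fun s : 'I_r => - (f s x * mu s))); last first.
      by move=> s _; rewrite ltn_ord mulNr mulrC.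
    by rewrite sumrN addNr.
  by have := H (fun u => if (u < r)%N then - mu u else 1) h2 r (ltnSn r); rewrite /= ltnn => /eqP; rewrite oner_eq0.
move=> t; have [x0 [Sx0 hx0]] := IH' t.
exists (x0 + ((t r - f r x0) / f r z) *: z); split; first by apply: SD => //; apply: SZ.
move=> s; rewrite ltnS leq_eqVlt; case/orP=> [/eqP->|sr].
  by rewrite fD fZ divfK // addrC subrK.
by rewrite fD fZ (z0 s sr) mulr0 addr0 hx0.
Qed.
End Surj.


Section Vec.
Variable k : fieldType.
Notation vec := (nat -> k^o).
Implicit Types x y w : vec.

Lemma addvE x y j : (x + y) j = x j + y j. Proof. by []. Qed.
Lemma scalvE a x j : (a *: x) j = a * x j. Proof. by []. Qed.
Lemma oppvE x j : (- x) j = - x j. Proof. by []. Qed.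
Lemma zerovE j : (0 : vec) j = 0. Proof. by []. Qed.

Definition fin x := exists N, fsupp (x : nat -> k) N.
Definition vpair x w : k := fsum (fun j => (x j : k) * w j).
Definition ev (i : nat) : vec := fun j => (j == i)%:R.
Definition lc (mu : nat -> k) (c : nat -> vec) r : vec := \sum_(s < r) mu s *: c s.

Lemma lcE mu c r j : lc mu c r j = \sum_(s < r) mu s * c s j.
Proof. by rewrite /lc fct_sumE. Qed.

Lemma pairE x w N : fsupp (w : nat -> k) N -> vpair x w = \sum_(j < N) x j * w j.
Proof. by move=> h; apply: fsumE => j /h ->; rewrite mulr0. Qed.
Lemma pairC x w : vpair x w = vpair w x.
Proof. by rewrite /vpair; congr fsum; apply: funext => j; rewrite mulrC. Qed.

Lemma fin0 : fin 0. Proof. by exists 0%N. Qed.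
Lemma finD x y : fin x -> fin y -> fin (x + y).
Proof.
move=> [N hN] [M hM]; exists (maxn N M) => j; rewrite geq_max => /andP[/hN h1 /hM h2].
by rewrite addvE h1 h2 addr0.
Qed.
Lemma finZ a x : fin x -> fin (a *: x).
Proof. by move=> [N hN]; exists N => j /hN h; rewrite scalvE h mulr0. Qed.
Lemma finN x : fin x -> fin (- x).
Proof. by move=> h; rewrite -scaleN1r; apply: finZ. Qed.
Lemma finB x y : fin x -> fin y -> fin (x - y).
Proof. by move=> hx hy; apply: finD => //; apply: finN. Qed.
Lemma fin_lc mu c r : (forall s, fin (c s)) -> fin (lc mu c r).
Proof.
move=> h; rewrite /lc; elim: r => [|r IH]; first by rewrite big_ord0; apply: fin0.
by rewrite big_ord_recr; apply: finD => //; apply: finZ.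
Qed.
Lemma fin_ev i : fin (ev i).
Proof. by exists i.+1 => j ij; rewrite /ev; case: eqP => // e; subst; rewrite ltnn in ij. Qed.

Lemma pairDl x y w : fin w -> vpair (x + y) w = vpair x w + vpair y w.
Proof.
move=> [N hN]; rewrite !(pairE _ hN) -big_split /=.
by apply: eq_bigr => j _; rewrite addvE mulrDl.
Qed.
Lemma pairZl a x w : fin w -> vpair (a *: x) w = a * vpair x w.
Proof.
move=> [N hN]; rewrite !(pairE _ hN) mulr_sumr.
by apply: eq_bigr => j _; rewrite scalvE mulrA.
Qed.
Lemma pairNl x w : fin w -> vpair (- x) w = - vpair x w.
Proof. by move=> h; rewrite -scaleN1r pairZl // mulN1r. Qed.
Lemma pairBl x y w : fin w -> vpair (x - y) w = vpair x w - vpair y w.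
Proof. by move=> h; rewrite pairDl // pairNl. Qed.
Lemma pair0l w : fin w -> vpair 0 w = 0.
Proof. by move=> h; rewrite -(scale0r (0 : vec)) pairZl // mul0r. Qed.
Lemma pair_lcl mu c r w : fin w -> vpair (lc mu c r) w = \sum_(s < r) mu s * vpair (c s) w.
Proof.
move=> h; rewrite /lc; elim: r => [|r IH]; first by rewrite !big_ord0 pair0l.
by rewrite !big_ord_recr pairDl // IH pairZl.
Qed.
Lemma pairDr x y w : fin w -> vpair w (x + y) = vpair w x + vpair w y.
Proof. by move=> h; rewrite pairC pairDl // pairC [vpair y w]pairC. Qed.
Lemma pairZr a x w : fin w -> vpair w (a *: x) = a * vpair w x.
Proof. by move=> h; rewrite pairC pairZl // pairC. Qed.
Lemma pairBr x y w : fin w -> vpair w (x - y) = vpair w x - vpair w y.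
Proof. by move=> h; rewrite pairC pairBl // pairC [vpair y w]pairC. Qed.
Lemma pair_lcr mu c r w : fin w -> vpair w (lc mu c r) = \sum_(s < r) mu s * vpair w (c s).
Proof.
move=> h; rewrite pairC pair_lcl //; by apply: eq_bigr => s _; rewrite pairC.
Qed.
Lemma pair_ev x i : vpair x (ev i) = x i.
Proof.
have [N hN] := fin_ev i; rewrite (pairE _ (_ : fsupp (ev i) i.+1)); last first.
  by move=> j ij; rewrite /ev; case: eqP => // e; subst; rewrite ltnn in ij.
rewrite big_ord_recr /= /ev eqxx mulr1 big1 ?add0r // => j _.
by rewrite (ltn_eqF (ltn_ord j)) mulr0.
Qed.

Lemma lc_ext mu c c' r r' : (r <= r')%N -> (forall s, (s < r)%N -> c' s = c s) ->
  lc mu c r = lc (fun s => if (s < r)%N then mu s else 0) c' r'.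
Proof.
move=> rr' hc; rewrite /lc -(subnKC rr') big_split_ord /=.
rewrite [X in _ = _ + X]big1 ?addr0; last by move=> i _; rewrite ltnNge leq_addr /= scale0r.
by apply: eq_bigr => i _; rewrite ltn_ord hc.
Qed.

End Vec.
Arguments ev {k}. Arguments vpair {k}. Arguments fin {k}. Arguments lc {k}.


Section Step.
Variable k : fieldType.
Notation vec := (nat -> k^o).
Variables (P Q : vec -> Prop) (b : vec -> vec -> k).
Hypotheses (P0 : P 0) (PD : forall x y, P x -> P y -> P (x + y))
  (PZ : forall a x, P x -> P (a *: x)) (Pfin : forall x, P x -> fin x)
  (Qfin : forall w, Q w -> fin w)
  (Pcl : forall z, fin z -> (forall w, Q w -> b z w = 0) -> P z)
  (bDl : forall x y w, fin w -> b (x + y) w = b x w + b y w)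
  (bZl : forall a x w, fin w -> b (a *: x) w = a * b x w).

Definition Iown (c : nat -> vec) r := forall mu : nat -> k,
  (forall w, Q w -> \sum_(s < r) mu s * b (c s) w = 0) -> forall s, (s < r)%N -> mu s = 0.
Definition Ioth (d : nat -> vec) r := forall lam : nat -> k,
  (forall x, P x -> \sum_(u < r) lam u * b x (d u) = 0) -> forall u, (u < r)%N -> lam u = 0.
Definition Orth (c : nat -> vec) rc (d : nat -> vec) rd :=
  forall s u, (s < rc)%N -> (u < rd)%N -> b (c s) (d u) = 0.

Lemma b_lcl mu c r w : fin w -> b (lc mu c r) w = \sum_(s < r) mu s * b (c s) w.
Proof.
move=> h; rewrite /lc; elim: r => [|r IH].
  by rewrite !big_ord0 -(scale0r (0 : vec)) bZl // mul0r.
by rewrite !big_ord_recr bDl // IH bZl.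
Qed.

Lemma PN x : P x -> P (- x).
Proof. by move=> h; rewrite -scaleN1r; apply: PZ. Qed.

Lemma step c rc d rd e : fin e -> (forall s, fin (c s)) -> (forall u, fin (d u)) ->
  Iown c rc -> Ioth d rd -> Orth c rc d rd ->
  exists c' rc', [/\ (rc <= rc')%N /\ (forall s, (s < rc)%N -> c' s = c s),
    (forall s, fin (c' s)), Iown c' rc', Orth c' rc' d rd &
    exists mu, P (e - lc mu c' rc')].
Proof.
move=> fe fc fd ic id oc.
case: (pselect (exists mu, P (e - lc mu c rc))) => [ex|nex].
  by exists c, rc; split.
have fD : forall s x y, b (x + y) (d s) = b x (d s) + b y (d s) by move=> s x y; apply: bDl.
have fZ : forall s a x, b (a *: x) (d s) = a * b x (d s) by move=> s a x; apply: bZl.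
have [x [Px hx]] := @surj k vec P (fun u x => b x (d u)) P0 PD PZ fD fZ rd id
  (fun u => - b e (d u)).
pose cn := e + x.
pose c' := fun s => if s == rc then cn else c s.
have c'lt : forall s, (s < rc)%N -> c' s = c s.
  by move=> s sr; rewrite /c' (ltn_eqF sr).
have lc' : forall mu, lc mu c' rc.+1 = lc mu c rc + mu rc *: cn.
  move=> mu; rewrite /lc big_ord_recr /= /c' eqxx; congr (_ + _).
  by apply: eq_bigr => i _; rewrite (ltn_eqF (ltn_ord i)).
exists c', rc.+1; split => //.
- by move=> s; rewrite /c'; case: eqP => _ //; apply: finD => //; apply: Pfin.
- move=> mu hmu.
  have Pz : P (lc mu c' rc.+1).
    apply: Pcl; first by apply: fin_lc => s; rewrite /c'; case: eqP => _ //;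
      apply: finD => //; apply: Pfin.
    by move=> w Qw; rewrite b_lcl; [exact: hmu | exact: Qfin].
  have mr : mu rc = 0.
    apply: contrapT => nz; apply: nex; exists (fun s => - mu s / mu rc).
    have -> : e - lc (fun s => - mu s / mu rc) c rc =
              (mu rc)^-1 *: lc mu c' rc.+1 - x.
      rewrite lc' scalerDr scalerA mulVf; last by apply/eqP.
      rewrite scale1r /cn /lc scaler_sumr -sumrN.
      rewrite addrC -!addrA; congr (_ + _).
        by apply: eq_bigr => i _; rewrite scalerA -scaleNr mulNr opprK mulrC.
      by rewrite subrr addr0.
    by apply: PD => //; [apply: PZ | apply: PN].
  move=> s; rewrite ltnS leq_eqVlt; case/orP=> [/eqP->//|sr].
  apply: (ic mu) => // w Qw; have := hmu w Qw.
  rewrite big_ord_recr /= mr mul0r addr0 => h; apply: (etrans _ h).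
  by apply: eq_bigr => i _; rewrite c'lt.
- move=> s u; rewrite ltnS leq_eqVlt; case/orP=> [/eqP->|sr] ur.
    by rewrite /c' eqxx /cn bDl // hx // subrr.
  by rewrite c'lt // oc.
- exists (fun s => (s == rc)%:R); rewrite lc' eqxx scale1r.
  have -> : lc (fun s => (s == rc)%:R) c rc = 0.
    by rewrite /lc big1 // => i _; rewrite (ltn_eqF (ltn_ord i)) scale0r.
  by rewrite add0r /cn opprD addrA subrr add0r; apply: PN.
Qed.

End Step.


Section Rick.
Variable k : fieldType.
Notation vec := (nat -> k^o).
Variable a : rcfm_type k.

Definition Kp (x : vec) := fin x /\ forall i, vpair (a i) x = 0.
Definition Lp (w : vec) := fin w /\ forall x, Kp x -> vpair x w = 0.

Lemma fin_row i : fin (a i : vec). Proof. exact: rowf. Qed.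

Lemma Kp0 : Kp 0.
Proof. by split; [apply: fin0 | move=> i; rewrite pairC; apply: pair0l; apply: fin_row]. Qed.
Lemma KpD x y : Kp x -> Kp y -> Kp (x + y).
Proof.
move=> [fx hx] [fy hy]; split; first exact: finD.
by move=> i; rewrite pairC (pairDl _ _ (fin_row i)) [vpair x _]pairC [vpair y _]pairC hx hy addr0.
Qed.
Lemma KpZ c x : Kp x -> Kp (c *: x).
Proof.
move=> [fx hx]; split; first exact: finZ.
by move=> i; rewrite pairC (pairZl _ _ (fin_row i)) pairC hx mulr0.
Qed.
Lemma Lp0 : Lp 0.
Proof. by split; [apply: fin0 | move=> x [fx _]; rewrite pairC pair0l]. Qed.
Lemma LpD x y : Lp x -> Lp y -> Lp (x + y).
Proof.
move=> [fx hx] [fy hy]; split; first exact: finD.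
by move=> z [fz hz]; rewrite pairDr // hx ?hy // addr0.
Qed.
Lemma LpZ c x : Lp x -> Lp (c *: x).
Proof.
move=> [fx hx]; split; first exact: finZ.
by move=> z [fz hz]; rewrite pairZr // hx ?mulr0.
Qed.
Lemma Kcl z : fin z -> (forall w, Lp w -> vpair z w = 0) -> Kp z.
Proof.
move=> fz h; split => // i; rewrite pairC; apply: h; split; first exact: fin_row.
by move=> x [_ hx]; rewrite pairC hx.
Qed.
Lemma Lcl z : fin z -> (forall x, Kp x -> vpair x z = 0) -> Lp z.
Proof. by move=> fz h; split. Qed.

Notation flip := (fun w x : vec => vpair x w).

Record St := MkSt { rc : nat; cs : nat -> vec; rd : nat; ds : nat -> vec }.

Definition Inv (s : St) :=
  [/\ (forall u, fin (cs s u)), (forall u, fin (ds s u)),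
      Iown Lp vpair (cs s) (rc s), Iown Kp flip (ds s) (rd s) &
      Orth vpair (cs s) (rc s) (ds s) (rd s)].
Definition Ext (s s' : St) :=
  [/\ (rc s <= rc s')%N, (forall u, (u < rc s)%N -> cs s' u = cs s u),
      (rd s <= rd s')%N & (forall u, (u < rd s)%N -> ds s' u = ds s u)].
Definition Good t (s : St) :=
  (exists mu, Kp (ev t - lc mu (cs s) (rc s))) /\
  (exists lam, Lp (ev t - lc lam (ds s) (rd s))).

Lemma Ext_refl s : Ext s s. Proof. by split. Qed.
Lemma Ext_trans s1 s2 s3 : Ext s1 s2 -> Ext s2 s3 -> Ext s1 s3.
Proof.
move=> [h1 h2 h3 h4] [g1 g2 g3 g4]; split.
- exact: leq_trans h1 g1.
- by move=> u ur; rewrite g2 ?h2 //; apply: leq_trans ur h1.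
- exact: leq_trans h3 g3.
- by move=> u ur; rewrite g4 ?h4 //; apply: leq_trans ur h3.
Qed.
Lemma Good_ext t s s' : Ext s s' -> Good t s -> Good t s'.
Proof.
move=> [h1 h2 h3 h4] [[mu hmu] [lam hlam]]; split.
  by exists (fun u => if (u < rc s)%N then mu u else 0); rewrite -(lc_ext mu h1 h2).
by exists (fun u => if (u < rd s)%N then lam u else 0); rewrite -(lc_ext lam h3 h4).
Qed.

Lemma full_step s t : Inv s -> exists s', [/\ Inv s', Ext s s' & Good t s'].
Proof.
move=> [fc fd ic id oc].
have [c' [rc' [[l1 l2] fc' ic' oc' [mu hmu]]]] :=
  @step k Kp Lp vpair Kp0 KpD KpZ (fun x h => h.1) (fun x h => h.1) Kcl
    (fun x y w h => pairDl x y h) (fun c x w h => pairZl c x h)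
    (cs s) (rc s) (ds s) (rd s) (ev t) (@fin_ev k t) fc fd ic id oc.
have [d' [rd' [[m1 m2] fd' id' od' [lam hlam]]]] :=
  @step k Lp Kp flip Lp0 LpD LpZ (fun x h => h.1) (fun x h => h.1) Lcl
    (fun x y w h => pairDr x y h) (fun c x w h => pairZr c x h)
    (ds s) (rd s) c' rc' (ev t) (@fin_ev k t) fd fc' id ic' (fun u v hu hv => oc' v u hv hu).
exists (MkSt rc' c' rd' d'); split => //=.
- split => //= u v hu hv; exact: od'.
- by split; [exists mu | exists lam].
Qed.

Definition st0 := MkSt 0 (fun _ => 0) 0 (fun _ => 0).
Lemma Inv0 : Inv st0.
Proof. by split => //= *; apply: fin0. Qed.

Fixpoint seqs t := if t is t'.+1 then
  epsilon (inhabits st0) (fun s' => [/\ Inv s', Ext (seqs t') s' & Good t' s'])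
  else st0.

Lemma seqs_spec t : Inv (seqs t) /\ [/\ Inv (seqs t.+1), Ext (seqs t) (seqs t.+1) & Good t (seqs t.+1)].
Proof.
elim: t => [|t [IH1 IH2]].
  split; first exact: Inv0.
  by apply: (epsilon_spec (inhabits st0) (fun s' => [/\ Inv s', Ext st0 s' & Good 0 s'])); apply: full_step; exact: Inv0.
split; first by case: IH2.
have I1 : Inv (seqs t.+1) by case: IH2.
apply: (epsilon_spec (inhabits st0) (fun s' => [/\ Inv s', Ext (seqs t.+1) s' & Good t.+1 s'])).
exact: full_step.
Qed.

Lemma seqs_ext t t' : (t <= t')%N -> Ext (seqs t) (seqs t').
Proof.
move=> tt'; rewrite -(subnKC tt'); elim: (t' - t)%N => [|n IH]; first by rewrite addn0; apply: Ext_refl.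
by apply: Ext_trans IH _; rewrite addnS; case: (seqs_spec (t + n)) => _ [].
Qed.

Lemma good_all t : Good t (seqs t.+1).
Proof. by case: (seqs_spec t) => _ []. Qed.

Lemma inv_all t : Inv (seqs t).
Proof. by case: (seqs_spec t). Qed.

End Rick.


Section Fin.
Variable k : fieldType.
Notation vec := (nat -> k^o).
Variable a : rcfm_type k.

Definition muf := projT1 (boolp.choice (fun j => (good_all a j).1)).
Definition lamf := projT1 (boolp.choice (fun j => (good_all a j).2)).
Definition gam j : vec := lc (muf j) (cs (seqs a j.+1)) (rc (seqs a j.+1)).
Definition del j : vec := lc (lamf j) (ds (seqs a j.+1)) (rd (seqs a j.+1)).
Lemma Kkap j : Kp a (ev j - gam j).
Proof. exact: (projT2 (boolp.choice (fun j => (good_all a j).1)) j). Qed.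
Lemma Ldel j : Lp a (ev j - del j).
Proof. exact: (projT2 (boolp.choice (fun j => (good_all a j).2)) j). Qed.
Lemma fin_del j : fin (del j).
Proof. by apply: fin_lc; case: (inv_all a j.+1). Qed.

Lemma orth_gd j i : vpair (gam j) (del i) = 0.
Proof.
have e1 : Ext (seqs a j.+1) (seqs a (maxn j i).+1).
  by apply: seqs_ext; rewrite ltnS leq_maxl.
have e2 : Ext (seqs a i.+1) (seqs a (maxn j i).+1).
  by apply: seqs_ext; rewrite ltnS leq_maxr.
case: e1 => h1 h2 _ _; case: e2 => _ _ g3 g4.
rewrite /gam /del (lc_ext _ h1 h2) (lc_ext _ g3 g4).
have [fc fd _ _ oc] := inv_all a (maxn j i).+1.
rewrite pair_lcl; last exact: fin_lc.
apply: big1 => s _; rewrite pair_lcr // big1 ?mulr0 // => u _.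
by rewrite oc ?mulr0.
Qed.

Definition Emx i j : k := (ev j - gam j) i.

Lemma Erow i j : Emx i j = del i j.
Proof.
have fK := (Kkap j).1.
rewrite /Emx -pair_ev.
have h1 := pairBr (ev i) (del i) fK.
rewrite (Ldel i).2 in h1; last exact: Kkap.
move/eqP: h1; rewrite eq_sym subr_eq0 => /eqP ->.
by rewrite (pairBl _ _ (fin_del i)) (orth_gd j i) subr0 pairC pair_ev.
Qed.

Lemma Erc : row_col_finite Emx.
Proof.
split=> x.
  have [N hN] := fin_del x; exists N => j /hN h; by rewrite Erow.
by have [N hN] := (Kkap x).1; exists N.
Qed.

Definition Em : rcfm_type k := RCFMat Erc.

Lemma mulE (A B : RCFM k) i j : (A * B : RCFM k) i j = mulf A B i j.
Proof. by []. Qed.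

Lemma rick : exists E : RCFM k, (a : RCFM k) * E = 0 /\
  forall X : RCFM k, (a : RCFM k) * X = 0 -> E * X = X.
Proof.
exists Em; split.
  apply: rcfm_ext => i j; rewrite mulE /mulf.
  exact: (Kkap j).2 i.
move=> X hX; apply: rcfm_ext => i j; rewrite mulE /mulf.
have -> : (fun l => Em i l * X l j) = (fun l => del i l * X l j).
  by apply: funext => l; rewrite /= Erow.
pose x : vec := fun l => X l j.
have Kx : Kp a x.
  split; first exact: colf.
  move=> i'; have := congr1 (fun M : RCFM k => M i' j) hX.
  by rewrite mulE /mulf.
change (vpair (del i) x = X i j).
have h1 := pairBr (ev i) (del i) Kx.1.
rewrite (Ldel i).2 // pair_ev in h1.
rewrite pairC; by move/eqP: h1; rewrite eq_sym subr_eq0 => /eqP <-.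
Qed.

End Fin.


Theorem corollary7p16 (k : fieldType) (M : rmodType (RCFM k)) :
  rfinitely_presented M -> rpd_le1 M.
Proof.
apply: main_abs; last exact: iso_rcfm.
by move=> a; exact: (rick a).
Qed.
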